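(* Let $F_1,F_2:\mathbb{R}^n\rightrightarrows\mathbb{R}^p$ be nearly convex set-valued mappings with $\operatorname{ri}(\operatorname{dom} F_1)\cap\operatorname{ri}(\operatorname{dom} F_2)\neq\emptyset$. Then $$\operatorname{ri}\big(\operatorname{gph}(F_1+F_2)\big)=\{(x,y)\in\mathbb{R}^n\times\mathbb{R}^p: x\in\operatorname{ri}(\operatorname{dom} F_1)\cap\operatorname{ri}(\operatorname{dom} F_2),\ y\in\operatorname{ri} F_1(x)+\operatorname{ri} F_2(x)\}.$$
   Context: A set $\Omega\subset\mathbb{R}^k$ is nearly convex if there is a convex set $C$ with $C\subset\Omega\subset\overline{C}$. For an arbitrary set $\Omega$, $\operatorname{ri}\Omega=\{a\in\Omega:\exists\delta>0,\ B(a;\delta)\cap\operatorname{aff}\Omega\subset\Omega\}$. For $F:\mathbb{R}^n\rightrightarrows\mathbb{R}^p$: $\operatorname{dom} F=\{x:F(x)\neq\emptyset\}$, $\operatorname{gph} F=\{(x,y):y\in F(x)\}$; $F$ is nearly convex if $\operatorname{gph} F$ is nearly convex. $(F_1+F_2)(x)=F_1(x)+F_2(x)$ (Minkowski sum, empty if either summand is empty). *)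

(* Defs.v *)
(* R^k is modelled as 'rV[R]_k for R : realType,
   with the Euclidean norm; R^n x R^p is identified with R^(n+p) via row_mx. *)
From HB Require Import structures.
From mathcomp Require Import all_boot all_order all_algebra.
From mathcomp Require Import boolp classical_sets reals.
Set Implicit Arguments. Unset Strict Implicit. Unset Printing Implicit Defensive.
Import Order.TTheory GRing.Theory Num.Theory.
Local Open Scope ring_scope.
Local Open Scope classical_set_scope.

Section Defs.
Variable R : realType.

Definition enorm (k : nat) (v : 'rV[R]_k) : R := Num.sqrt (\sum_(i < k) v 0 i ^+ 2).

Definition eball (k : nat) (a : 'rV[R]_k) (d : R) : set 'rV[R]_k :=
  [set x | enorm (x - a) < d].

Definition eclosure (k : nat) (C : set 'rV[R]_k) : set 'rV[R]_k :=
  [set x | forall e : R, 0 < e -> exists c, C c /\ enorm (c - x) < e].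

Definition convex_set (k : nat) (C : set 'rV[R]_k) : Prop :=
  forall x y t, C x -> C y -> 0 <= t -> t <= 1 -> C (t *: x + (1 - t) *: y).

Definition nearly_convex (k : nat) (Om : set 'rV[R]_k) : Prop :=
  exists C, convex_set C /\ C `<=` Om /\ Om `<=` eclosure C.

Definition aff (k : nat) (Om : set 'rV[R]_k) : set 'rV[R]_k :=
  [set x | exists (m : nat) (pts : 'I_m -> 'rV[R]_k) (w : 'I_m -> R),
      (forall i, Om (pts i)) /\ \sum_(i < m) w i = 1 /\
      x = \sum_(i < m) w i *: pts i].

Definition ri (k : nat) (Om : set 'rV[R]_k) : set 'rV[R]_k :=
  [set a | Om a /\ exists d : R, 0 < d /\ eball a d `&` aff Om `<=` Om].

Definition dom (n p : nat) (F : 'rV[R]_n -> set 'rV[R]_p) : set 'rV[R]_n :=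
  [set x | F x !=set0].

Definition gph (n p : nat) (F : 'rV[R]_n -> set 'rV[R]_p) : set 'rV[R]_(n + p) :=
  [set z | exists x y, z = row_mx x y /\ F x y].

Definition nearly_convex_map (n p : nat) (F : 'rV[R]_n -> set 'rV[R]_p) : Prop :=
  nearly_convex (gph F).

Definition msum (p : nat) (A B : set 'rV[R]_p) : set 'rV[R]_p :=
  [set y | exists y1 y2, A y1 /\ B y2 /\ y = y1 + y2].

Definition sum_map (n p : nat) (F1 F2 : 'rV[R]_n -> set 'rV[R]_p) : 'rV[R]_n -> set 'rV[R]_p :=
  fun x => msum (F1 x) (F2 x).

End Defs.

(* Main.v *)
Require Import Defs.
From HB Require Import structures.
From mathcomp Require Import all_boot all_order all_algebra.
From mathcomp Require Import boolp classical_sets reals.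
From mathcomp Require Import ring lra.
Import Order.TTheory GRing.Theory Num.Theory.
Local Open Scope ring_scope.
Local Open Scope classical_set_scope.
Set Implicit Arguments. Unset Strict Implicit. Unset Printing Implicit Defensive.

Section Norm.
Variable R : realType.

Definition sq (k : nat) (v : 'rV[R]_k) : R := \sum_(i < k) v 0 i ^+ 2.

Lemma sq_ge0 k (v : 'rV[R]_k) : 0 <= sq v.
Proof. by apply: sumr_ge0 => i _; rewrite sqr_ge0. Qed.

Lemma enorm_ge0 k (v : 'rV[R]_k) : 0 <= enorm v.
Proof. exact: sqrtr_ge0. Qed.

Lemma enorm_coord k (v : 'rV[R]_k) i : `|v 0 i| <= enorm v.
Proof.
rewrite /enorm -sqrtr_sqr ler_wsqrtr // (bigD1 i) //= lerDl.
by apply: sumr_ge0 => j _; rewrite sqr_ge0.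
Qed.

Lemma enormZ k a (v : 'rV[R]_k) : enorm (a *: v) = `|a| * enorm v.
Proof.
rewrite /enorm -sqrtr_sqr -sqrtrM ?sqr_ge0 // mulr_sumr.
by congr Num.sqrt; apply: eq_bigr => i _; rewrite mxE exprMn.
Qed.

Lemma enormN k (v : 'rV[R]_k) : enorm (- v) = enorm v.
Proof. by rewrite -scaleN1r enormZ normrN normr1 mul1r. Qed.

Lemma enormB k (u v : 'rV[R]_k) : enorm (u - v) = enorm (v - u).
Proof. by rewrite -enormN opprB. Qed.

Lemma enorm0 k : enorm (0 : 'rV[R]_k) = 0.
Proof. by rewrite -(scale0r 0) enormZ normr0 mul0r. Qed.

Lemma enormD k (u v : 'rV[R]_k) : enorm (u + v) <= 2 * (enorm u + enorm v).
Proof.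
have h0 : 0 <= 2 * (enorm u + enorm v) by rewrite mulr_ge0 ?addr_ge0 ?enorm_ge0.
rewrite /enorm -(ger0_norm h0) -sqrtr_sqr ler_wsqrtr //.
have e1 : \sum_(i < k) (u + v) 0 i ^+ 2 <= 2 * (sq u + sq v).
  rewrite /sq -big_split mulr_sumr /=; apply: ler_sum => i _; rewrite mxE.
  set a := u 0 i; set b := v 0 i; have := sqr_ge0 (a - b); nra.
apply: (le_trans e1).
have hu := sq_ge0 u; have hv := sq_ge0 v.
have eu : enorm u ^+ 2 = sq u by rewrite /enorm sqr_sqrtr.
have ev : enorm v ^+ 2 = sq v by rewrite /enorm sqr_sqrtr.
have pu := enorm_ge0 u; have pv := enorm_ge0 v.
rewrite -eu -ev; nra.
Qed.

Lemma sq_row n p (x : 'rV[R]_n) (y : 'rV[R]_p) : sq (row_mx x y) = sq x + sq y.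
Proof.
rewrite /sq big_split_ord /=; congr (_ + _); apply: eq_bigr => i _.
  by rewrite row_mxEl.
by rewrite row_mxEr.
Qed.

Lemma enorm_row_l n p (x : 'rV[R]_n) (y : 'rV[R]_p) : enorm x <= enorm (row_mx x y).
Proof. by rewrite /enorm ler_wsqrtr // (sq_row x y : \sum_(i < n + p) _ = _) lerDl sq_ge0. Qed.

Lemma enorm_row0 n p (y : 'rV[R]_p) : enorm (row_mx (0 : 'rV[R]_n) y) = enorm y.
Proof.
rewrite /enorm (sq_row 0 y : \sum_(i < n + p) _ = _) /sq big1 ?add0r // => i _.
by rewrite mxE expr0n.
Qed.

Definition Kc k m (M : 'M[R]_(k, m)) : R := \sum_j \sum_i `|M j i|.

Lemma Kc_ge0 k m (M : 'M[R]_(k, m)) : 0 <= Kc M.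
Proof. by apply: sumr_ge0 => j _; apply: sumr_ge0 => i _. Qed.

Lemma coef_bound k m (v : 'rV[R]_k) (M : 'M[R]_(k, m)) i :
  `|(v *m M) 0 i| <= enorm v * Kc M.
Proof.
rewrite mxE; apply: (le_trans (ler_norm_sum _ _ _)).
rewrite /Kc mulr_sumr; apply: ler_sum => j _.
rewrite normrM; apply: ler_pM => //; first exact: enorm_coord.
by rewrite (bigD1 i) //= lerDl; apply: sumr_ge0.
Qed.

Lemma cone k (C : set 'rV[R]_k) (hC : convex_set C) z0 : C z0 ->
  forall m (P : 'I_m -> 'rV[R]_k) (b : 'I_m -> R),
  (forall i, C (z0 + P i)) -> (forall i, 0 <= b i) -> \sum_i b i <= 1 ->
  C (z0 + \sum_i b i *: P i).
Proof.
move=> Cz0; elim=> [|m IH] P b CP b0 bs.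
  by rewrite big_ord0 addr0.
rewrite big_ord_recl; move: bs; rewrite big_ord_recl => bs.
have S0 : 0 <= \sum_(i < m) b (lift ord0 i) by apply: sumr_ge0.
have b01 : b ord0 <= 1 by lra.
have [e1|ne1] := eqVneq (b ord0) 1.
  have Sz : \sum_(i < m) b (lift ord0 i) = 0 by apply/eqP; rewrite eq_le S0 andbT; lra.
  rewrite big1 ?addr0 ?e1 ?scale1r //.
  move=> i _; rewrite (psumr_eq0P _ Sz) ?scale0r // => j _; exact: b0.
have sp : 0 < 1 - b ord0 by rewrite subr_gt0 lt_neqAle ne1.
set s := 1 - b ord0 in sp.
have := IH (fun i => P (lift ord0 i)) (fun i => b (lift ord0 i) / s)
  (fun i => CP _) (fun i => divr_ge0 (b0 _) (ltW sp)).
rewrite -mulr_suml ler_pdivrMr // mul1r => /(_ ltac:(rewrite /s; lra)) Cw.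
have := hC _ _ (b ord0) (CP ord0) Cw (b0 _) b01.
congr C; rewrite -/s scalerDr scalerDr scaler_sumr addrA.
have -> : s *: z0 = z0 - b ord0 *: z0 by rewrite /s scalerBl scale1r.
rewrite [_ + b ord0 *: P ord0 + _]addrAC [b ord0 *: z0 + _]addrC subrK -addrA.
congr (_ + (_ + _)); apply: eq_bigr => i _.
by rewrite scalerA mulrC -mulrA mulVf ?mulr1 // gt_eqF.
Qed.

Lemma small0 (x K : R) : 0 <= K -> (forall e, 0 < e -> `|x| <= e * K) -> x = 0.
Proof.
move=> K0 H; apply/eqP; apply/negPn/negP => nx.
have hx : 0 < `|x| by rewrite normr_gt0.
have := H (`|x| / (K + 1)) (divr_gt0 hx (ltr_wpDl K0 ltr01)).
rewrite mulrAC ler_pdivlMr ?ltr_wpDl //; nra.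
Qed.

Lemma subB_sub (F : fieldType) m1 m2 n (A B : 'M[F]_(m1, n)) (C : 'M[F]_(m2, n)) :
  (A <= C)%MS -> (B <= C)%MS -> ((A - B)%R <= C)%MS.
Proof. by move=> hA hB; apply: addmx_sub => //; rewrite -scaleN1r scalemx_sub. Qed.

Lemma sum2 (V : zmodType) (f : 'I_2 -> V) : \sum_(i < 2) f i = f ord0 + f (lift ord0 ord0).
Proof. by rewrite big_ord_recl big_ord_recl big_ord0 addr0. Qed.

Lemma ri_pro k (Om : set 'rV[R]_k) z c : ri Om z -> Om c ->
  exists e, 0 < e /\ Om (z + e *: (z - c)).
Proof.
move=> [Oz [d [d0 hd]]] Oc.
set E := enorm (z - c).
have E0 : 0 <= E by exact: enorm_ge0.
have e0 : 0 < d / (2 * (E + 1)) by rewrite divr_gt0 // mulr_gt0 // ltr_wpDl.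
exists (d / (2 * (E + 1))); split => //; apply: hd; split.
  rewrite /eball /= addrC addKr enormZ ger0_norm ?ltW // -/E.
  rewrite mulrAC ltr_pdivrMr ?mulr_gt0 ?ltr_wpDl //; nra.
exists 2%N, (fun i : 'I_2 => if i == ord0 then z else c),
  (fun i : 'I_2 => if i == ord0 then 1 + d / (2 * (E + 1)) else - (d / (2 * (E + 1)))).
split; first by move=> i; case: ifP.
rewrite !sum2 /=; split; first by ring.
apply/rowP => j; rewrite !mxE; ring.
Qed.

Lemma enorm_lt_coord k n (v : 'rV[R]_k) (M : 'M[R]_(k, n)) e i : enorm v < e ->
  `|(v *m M) 0 i| <= e * Kc M.
Proof.
move=> h; apply: (le_trans (coef_bound _ _ _)); apply: ler_wpM2r; first exact: Kc_ge0.
exact: ltW.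
Qed.

Section Core.
Variables (k m : nat) (C : set 'rV[R]_k) (z0 : 'rV[R]_k) (B : 'M[R]_(m, k)).
Hypotheses (hC : convex_set C) (Cz0 : C z0) (rowsC : forall i, C (z0 + row i B))
  (span : forall c, C c -> (c - z0 <= B)%MS).

Definition rint z := C z /\ exists e, 0 < e /\
  forall v, (v <= B)%MS -> enorm v < e -> C (z + v).

Lemma cl_sub b : eclosure C b -> (b - z0 <= B)%MS.
Proof.
move=> hb; rewrite submxE; apply/eqP/rowP => j; rewrite [RHS]mxE.
apply: (small0 (Kc_ge0 (cokermx B))) => e e0.
have [c [Cc hc]] := hb e e0.
have h0 : ((c - z0) *m cokermx B) = 0 by apply/eqP; rewrite -submxE span.
have -> : b - z0 = (b - c) + (c - z0) by rewrite addrA subrK.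
rewrite [(_ + _) *m _]mulmxDl h0 addr0.
by apply: enorm_lt_coord; rewrite enormB.
Qed.

Lemma aff_sub (Om : set 'rV[R]_k) : Om `<=` eclosure C ->
  forall w, aff Om w -> (w - z0 <= B)%MS.
Proof.
move=> hO w [n [pts [wt [hp [hs ->]]]]].
have -> : \sum_i wt i *: pts i - z0 = \sum_i wt i *: (pts i - z0).
  rewrite -[z0 in LHS]scale1r -hs scaler_suml -sumrB.
  by apply: eq_bigr => i _; rewrite scalerBr.
by apply: summx_sub => i _; apply: scalemx_sub; apply: cl_sub; apply: hO.
Qed.

Lemma rint_ex : exists z, rint z.
Proof.
set eta : R := (2 * (m%:R + 1))^-1.
have m0 : 0 <= m%:R :> R by rewrite ler0n.
have eta0 : 0 < eta by rewrite invr_gt0 mulr_gt0 // ltr_wpDl.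
have etaE : eta * (2 * (m%:R + 1)) = 1 by rewrite mulVf // gt_eqF // mulr_gt0 // ltr_wpDl.
set K := Kc (pinvmx B).
have K0 : 0 <= K by exact: Kc_ge0.
have eK0 : 0 < eta / (K + 1) by rewrite divr_gt0 // ltr_wpDl.
suff H : forall v, (v <= B)%MS -> enorm v < eta / (K + 1) ->
    C (z0 + \sum_i eta *: row i B + v).
  exists (z0 + \sum_i eta *: row i B); split.
    by have := H 0 (sub0mx _ _); rewrite enorm0 addr0; apply.
  by exists (eta / (K + 1)); split.
move=> v vB hv.
set a := v *m pinvmx B.
have hvE : v = \sum_i a 0 i *: row i B by rewrite -mulmx_sum_row mulmxKpV.
rewrite [X in _ + X]hvE -addrA -big_split /=.
have -> : \sum_i (eta *: row i B + a 0 i *: row i B) = \sum_i (eta + a 0 i) *: row i B.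
  by apply: eq_bigr => i _; rewrite scalerDl.
have ha : forall i, `|a 0 i| <= eta.
  move=> i; apply: (le_trans (enorm_lt_coord _ _ hv)).
  by rewrite mulrAC ler_pdivrMr ?ltr_wpDl // -/K; nra.
apply: cone => //.
- by move=> i; have := ha i; rewrite ler_norml => /andP[h1 h2]; lra.
apply: (@le_trans _ _ (\sum_(i < m) (2 * eta))).
  by apply: ler_sum => i _; have := ha i; rewrite ler_norml => /andP[h1 h2]; lra.
rewrite sumr_const card_ord -mulr_natr; nra.
Qed.

Lemma rint_seg a b t : rint a -> eclosure C b -> 0 <= t -> t < 1 ->
  rint (a + t *: (b - a)).
Proof.
move=> [Ca [e [e0 he]]] hb t0 t1.
have s0 : 0 < 1 - t by lra.
have d0 : 0 < (1 - t) * e / 4 by rewrite divr_gt0 ?mulr_gt0.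
suff H : forall v, (v <= B)%MS -> enorm v < (1 - t) * e / 4 ->
    C (a + t *: (b - a) + v).
  split; first by have := H 0 (sub0mx _ _); rewrite enorm0 addr0; apply.
  by exists ((1 - t) * e / 4); split.
move=> v vB hv.
have [c [Cc hc]] := hb _ d0.
set w := t *: (b - c) + v.
have bcB : (b - c <= B)%MS.
  have -> : b - c = (b - z0) - (c - z0) by apply/rowP => j; rewrite !mxE; ring.
  by apply: subB_sub; [apply: cl_sub | apply: span].
have wB : (w <= B)%MS by apply: addmx_sub => //; apply: scalemx_sub.
have hw : enorm w < (1 - t) * e.
  have := enormD (t *: (b - c)) v; rewrite enormZ ger0_norm // enormB -/w => h.
  have := enorm_ge0 (c - b); have := enorm_ge0 v; nra.
have Cq : C (a + (1 - t)^-1 *: w).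
  apply: he; first exact: scalemx_sub.
  by rewrite enormZ ger0_norm ?invr_ge0 ?ltW // mulrC ltr_pdivrMr // mulrC.
have := hC Cc Cq t0 (ltW t1).
congr C; rewrite scalerDr scalerA mulfV ?gt_eqF // scale1r /w.
by apply/rowP => j; rewrite !mxE; ring.
Qed.

Variable Om : set 'rV[R]_k.
Hypotheses (COm : C `<=` Om) (OmC : Om `<=` eclosure C).

Lemma rint_ri z : rint z -> ri Om z.
Proof.
move=> [Cz [e [e0 he]]]; split; first exact: COm.
exists e; split => // w [hw aw].
have wz : (w - z <= B)%MS.
  have -> : w - z = (w - z0) - (z - z0) by apply/rowP => j; rewrite !mxE; ring.
  by apply: subB_sub; [apply: (aff_sub OmC) | apply: span].
by have := he _ wz hw; rewrite addrC subrK; apply: COm.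
Qed.

Lemma ri_rint z : ri Om z -> rint z.
Proof.
move=> rz; have [a ra] := rint_ex.
have [e [e0 hO]] := ri_pro rz (COm ra.1).
have t0 : 0 <= (1 + e)^-1 by rewrite invr_ge0; lra.
have t1 : (1 + e)^-1 < 1 by rewrite invf_lt1; lra.
have := rint_seg ra (OmC hO) t0 t1.
congr rint; apply/rowP => j; rewrite !mxE; field; lra.
Qed.

End Core.

Lemma B_ex k (C : set 'rV[R]_k) (z0 : 'rV[R]_k) : C z0 ->
  exists m (B : 'M[R]_(m, k)), (forall i, C (z0 + row i B)) /\
    (forall c, C c -> (c - z0 <= B)%MS).
Proof.
move=> Cz0.
pose P : pred nat := fun r => `[< exists m (B : 'M[R]_(m, k)),
  (forall i, C (z0 + row i B)) /\ \rank B = r >].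
have exP : exists r, P r.
  exists 0%N; apply/asboolP; exists 0%N, 0; split; first by case.
  by apply/eqP; rewrite -leqn0 rank_leq_row.
have ubP : forall r, P r -> (r <= k)%N.
  by move=> r /asboolP [m [B [_ <-]]]; apply: rank_leq_col.
case: (ex_maxnP exP ubP) => r /asboolP [m [B [hB hr]]] max.
exists m, B; split => // c Cc; apply/negPn/negP => nc.
pose B' := col_mx B (c - z0).
have hB' : forall i, C (z0 + row i B').
  move=> i; rewrite -(splitK i); case: (split i) => j /=.
    by rewrite rowKu.
  rewrite rowKd; have -> : row j (c - z0) = c - z0 by apply/rowP => l; rewrite mxE (ord1 j).
  by rewrite addrC subrK.
have sub : (B <= B')%MS by rewrite -addsmxE addsmxSl.
have lt : (\rank B < \rank B')%N.
  rewrite (ltn_leqif (mxrank_leqif_sup sub)) col_mx_sub negb_and nc orbT //.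
have := max (\rank B') (asboolT (ex_intro _ (m + 1)%N (ex_intro _ B' (conj hB' erefl)))).
by rewrite -hr leqNgt lt.
Qed.

Lemma nc_all k (Om C : set 'rV[R]_k) x0 : convex_set C -> C `<=` Om ->
  Om `<=` eclosure C -> Om x0 ->
  [/\ (forall z, ri Om z -> C z), (exists a, ri Om a) &
      (forall a b t, ri Om a -> Om b -> 0 <= t -> t < 1 -> ri Om (a + t *: (b - a)))].
Proof.
move=> hC COm OmC Ox0.
have [z0 [Cz0 _]] := OmC _ Ox0 1 ltr01.
have [m [B [hB hspan]]] := B_ex Cz0.
split.
- by move=> z rz; have [] := ri_rint hC Cz0 hB hspan COm OmC rz.
- have [a ra] := rint_ex hC Cz0 hB.
  by exists a; apply: (rint_ri hspan COm OmC).
- move=> a b t ra Ob t0 t1; apply: (rint_ri hspan COm OmC).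
  apply: (rint_seg hC hspan) => //; last exact: OmC.
  exact: (ri_rint hC Cz0 hB hspan COm OmC).
Qed.

Lemma nc_seg k (Om : set 'rV[R]_k) a b t : nearly_convex Om -> ri Om a -> Om b ->
  0 <= t -> t < 1 -> ri Om (a + t *: (b - a)).
Proof.
move=> [C [hC [COm OmC]]] ra Ob; have [_ _ h] := nc_all hC COm OmC Ob; exact: h.
Qed.

Lemma nc_ne k (Om : set 'rV[R]_k) b : nearly_convex Om -> Om b -> exists a, ri Om a.
Proof. by move=> [C [hC [COm OmC]]] Ob; have [_ h _] := nc_all hC COm OmC Ob. Qed.

Lemma nc_riC k (Om C : set 'rV[R]_k) z : convex_set C -> C `<=` Om ->
  Om `<=` eclosure C -> ri Om z -> C z.
Proof. by move=> hC COm OmC rz; have [h _ _] := nc_all hC COm OmC rz.1; apply: h. Qed.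

Lemma ri_sub k (Om : set 'rV[R]_k) z : ri Om z -> Om z.
Proof. by case. Qed.

Lemma nc_pr k (Om : set 'rV[R]_k) a z e : nearly_convex Om -> ri Om a -> 0 < e ->
  Om (z + e *: (z - a)) -> ri Om z.
Proof.
move=> nc ra e0 Oz.
have t0 : 0 <= (1 + e)^-1 by rewrite invr_ge0; lra.
have t1 : (1 + e)^-1 < 1 by rewrite invf_lt1; lra.
have := nc_seg nc ra Oz t0 t1.
congr ri; apply/rowP => j; rewrite !mxE; field; lra.
Qed.

Lemma nc_R2 k (Om : set 'rV[R]_k) z : nearly_convex Om -> Om z ->
  (forall c, Om c -> exists e, 0 < e /\ Om (z + e *: (z - c))) -> ri Om z.
Proof.
move=> nc Oz hp; have [a ra] := nc_ne nc Oz.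
have [e [e0 he]] := hp a (ri_sub ra); exact: nc_pr nc ra e0 he.
Qed.

Lemma nc_small k (Om : set 'rV[R]_k) z c e1 e : nearly_convex Om -> ri Om z ->
  0 < e -> e <= e1 -> Om (z + e1 *: (z - c)) -> Om (z + e *: (z - c)).
Proof.
move=> nc rz e0 ee O1.
have e10 : 0 < e1 by apply: lt_le_trans ee.
have [eq|ne] := eqVneq e e1; first by rewrite eq.
have t0 : 0 <= e / e1 by rewrite divr_ge0 // ltW.
have t1 : e / e1 < 1 by rewrite ltr_pdivrMr // mul1r lt_neqAle ne.
have := ri_sub (nc_seg nc rz O1 t0 t1).
congr Om; apply/rowP => j; rewrite !mxE; field; lra.
Qed.

Section Maps.
Variables (n p : nat).
Implicit Types (F : 'rV[R]_n -> set 'rV[R]_p).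

Lemma gph_row F x y : gph F (row_mx x y) <-> F x y.
Proof.
split; last by move=> h; exists x, y.
by move=> [x' [y' [/eq_row_mx [-> ->] h]]].
Qed.

Lemma rmE1 (x x1 x2 : 'rV[R]_n) (y y1 y2 : 'rV[R]_p) e :
  row_mx x y + e *: (row_mx x1 y1 - row_mx x2 y2) =
  row_mx (x + e *: (x1 - x2)) (y + e *: (y1 - y2)).
Proof. by rewrite opp_row_mx add_row_mx scale_row_mx add_row_mx. Qed.

Lemma row_mx_sum m (f : 'I_m -> 'rV[R]_n) (g : 'I_m -> 'rV[R]_p) :
  \sum_i row_mx (f i) (g i) = row_mx (\sum_i f i) (\sum_i g i).
Proof.
apply/rowP => j; rewrite -(splitK j); case: (split j) => j' /=.
  by rewrite row_mxEl !summxE; apply: eq_bigr => i _; rewrite row_mxEl.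
by rewrite row_mxEr !summxE; apply: eq_bigr => i _; rewrite row_mxEr.
Qed.

Lemma fib_sub F x y : ri (gph F) (row_mx x y) -> ri (F x) y.
Proof.
move=> [Gxy [d [d0 hd]]]; split; first by apply/gph_row.
exists d; split => // y' [hy [m [pts [w [hp [hs hE]]]]]].
apply/gph_row; apply: hd; split.
  by rewrite /eball /= opp_row_mx add_row_mx subrr enorm_row0.
exists m, (fun i => row_mx x (pts i)), w; split; first by move=> i; apply/gph_row.
split => //; under eq_bigr do rewrite scale_row_mx.
by rewrite row_mx_sum -scaler_suml hs scale1r hE.
Qed.

Lemma dom_nc F : nearly_convex_map F -> nearly_convex (dom F).
Proof.
move=> [C [hC [CO OC]]].
exists [set x | exists y, C (row_mx x y)]; split; last split.
- move=> x1 x2 t [y1 h1] [y2 h2] t0 t1; exists (t *: y1 + (1 - t) *: y2).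
  by have := hC _ _ _ h1 h2 t0 t1; rewrite !scale_row_mx add_row_mx.
- by move=> x [y /CO /gph_row h]; exists y.
- move=> x [y Fy] e e0.
  have [c [Cc hc]] := OC _ (proj2 (gph_row F x y) Fy) e e0.
  exists (lsubmx c); split; first by exists (rsubmx c); rewrite hsubmxK.
  apply: le_lt_trans hc; rewrite -[c in X in _ <= X]hsubmxK opp_row_mx add_row_mx.
  exact: enorm_row_l.
Qed.

Lemma ex_ri F x : nearly_convex_map F -> ri (dom F) x ->
  exists w, ri (gph F) (row_mx x w).
Proof.
move=> nc rx.
have [y0 Fy0] := ri_sub rx.
have [q rq] := nc_ne nc (proj2 (gph_row F x y0) Fy0).
have [xq [yq [qE Fq]]] := ri_sub rq.
have [e [e0 [y'' Fy'']]] := ri_pro rx (ex_intro _ yq Fq : dom F xq).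
have t0 : 0 <= (1 + e)^-1 by rewrite invr_ge0; lra.
have t1 : (1 + e)^-1 < 1 by rewrite invf_lt1; lra.
have := nc_seg nc rq (proj2 (gph_row F _ _) Fy'') t0 t1.
rewrite qE rmE1 => h; eexists; congr (ri _ (row_mx _ _)): h.
apply/rowP => j; rewrite !mxE; field; exact: lt0r_neq0 (addr_gt0 ltr01 e0).
Qed.

Lemma fib_sup F x y : nearly_convex_map F -> ri (dom F) x -> ri (F x) y ->
  ri (gph F) (row_mx x y).
Proof.
move=> nc rx ry.
have [w rw] := ex_ri nc rx.
have [e [e0 he]] := ri_pro ry (proj1 (gph_row F x w) (ri_sub rw)).
apply: (nc_pr nc rw e0).
by rewrite rmE1 subrr scaler0 addr0; apply/gph_row.
Qed.

Lemma G_nc F1 F2 x0 : nearly_convex_map F1 -> nearly_convex_map F2 ->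
  ri (dom F1) x0 -> ri (dom F2) x0 -> nearly_convex (gph (sum_map F1 F2)).
Proof.
move=> nc1 nc2 r1 r2.
have nc1' := nc1; have nc2' := nc2.
move: nc1' nc2' => [C1 [hC1 [CO1 OC1]]] [C2 [hC2 [CO2 OC2]]].
have [w1 rw1] := ex_ri nc1 r1.
have [w2 rw2] := ex_ri nc2 r2.
exists [set z | exists x u1 u2, z = row_mx x (u1 + u2) /\ C1 (row_mx x u1) /\
  C2 (row_mx x u2)]; split; last split.
- move=> z z' t [x [u1 [u2 [-> [h1 h2]]]]] [x' [u1' [u2' [-> [h1' h2']]]]] t0 t1.
  exists (t *: x + (1 - t) *: x'), (t *: u1 + (1 - t) *: u1'),
    (t *: u2 + (1 - t) *: u2'); split.
    rewrite !scale_row_mx add_row_mx; congr row_mx.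
    by apply/rowP => j; rewrite !mxE; ring.
  split.
    by have := hC1 _ _ _ h1 h1' t0 t1; rewrite !scale_row_mx add_row_mx.
  by have := hC2 _ _ _ h2 h2' t0 t1; rewrite !scale_row_mx add_row_mx.
- move=> z [x [u1 [u2 [-> [/CO1/gph_row h1 /CO2/gph_row h2]]]]].
  by apply/gph_row; exists u1, u2.
- move=> z [x [y [-> [u1 [u2 [h1 [h2 ->]]]]]]] e e0.
  set E := enorm (row_mx x0 (w1 + w2) - row_mx x (u1 + u2)).
  have E0 : 0 <= E by exact: enorm_ge0.
  have D0 : 0 < e + E + 1 by rewrite -addrA addr_gt0 // ltr_wpDl.
  set s := e / (e + E + 1).
  have s0 : 0 < s by rewrite divr_gt0.
  have s1 : s < 1 by rewrite ltr_pdivrMr // mul1r; clear -E0; lra.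
  have t0 : 0 <= 1 - s by clear -s1; lra.
  have t1 : 1 - s < 1 by clear -s0; lra.
  have q1 := nc_riC hC1 CO1 OC1 (nc_seg nc1 rw1 (proj2 (gph_row _ _ _) h1) t0 t1).
  have q2 := nc_riC hC2 CO2 OC2 (nc_seg nc2 rw2 (proj2 (gph_row _ _ _) h2) t0 t1).
  rewrite rmE1 in q1; rewrite rmE1 in q2.
  eexists; split; first by exists (x0 + (1 - s) *: (x - x0)); do 2 eexists; split; [reflexivity|split; eassumption].
  have -> : row_mx (x0 + (1 - s) *: (x - x0)) (w1 + (1 - s) *: (u1 - w1) + (w2 + (1 - s) *: (u2 - w2)))
     - row_mx x (u1 + u2) = s *: (row_mx x0 (w1 + w2) - row_mx x (u1 + u2)).
    rewrite !opp_row_mx !add_row_mx scale_row_mx; congr row_mx;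
    by apply/rowP => j; rewrite !mxE; ring.
  rewrite enormZ ger0_norm ?ltW // -/E /s mulrAC ltr_pdivrMr //.
  by clear -E0 e0; nra.
Qed.

End Maps.

End Norm.

Unset Implicit Arguments.

Theorem theorem3p7 (R : realType) (n p : nat) (F1 F2 : 'rV[R]_n -> set 'rV[R]_p) :
  nearly_convex_map F1 -> nearly_convex_map F2 ->
  (ri (dom F1) `&` ri (dom F2)) !=set0 ->
  ri (gph (sum_map F1 F2)) =
  [set z | exists (x : 'rV[R]_n) (y : 'rV[R]_p), z = row_mx x y /\
     (ri (dom F1) `&` ri (dom F2)) x /\ msum (ri (F1 x)) (ri (F2 x)) y].
Proof.
move=> nc1 nc2 [x0 [r1 r2]].
have nG := G_nc nc1 nc2 r1 r2.
have nD1 := dom_nc nc1; have nD2 := dom_nc nc2.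
apply/seteqP; split => z.
- move=> rz; have [x [y [zE [u1 [u2 [h1 [h2 yE]]]]]]] := ri_sub rz.
  subst z; exists x, y; split => //; split.
    have [a1 Fa1] := ri_sub r1; have [a2 Fa2] := ri_sub r2.
    have G0 : gph (sum_map F1 F2) (row_mx x0 (a1 + a2)).
      by apply/gph_row; exists a1, a2.
    have [e [e0 he]] := ri_pro rz G0.
    rewrite rmE1 in he; move/gph_row: he => [v1 [v2 [hv1 [hv2 _]]]].
    split.
      exact: nc_pr nD1 r1 e0 (ex_intro _ v1 hv1).
    exact: nc_pr nD2 r2 e0 (ex_intro _ v2 hv2).
  have rx1 : ri (dom F1) x.
    have [a1 Fa1] := ri_sub r1; have [a2 Fa2] := ri_sub r2.
    have G0 : gph (sum_map F1 F2) (row_mx x0 (a1 + a2)).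
      by apply/gph_row; exists a1, a2.
    have [e [e0 he]] := ri_pro rz G0.
    rewrite rmE1 in he; move/gph_row: he => [v1 [v2 [hv1 [hv2 _]]]].
    exact: nc_pr nD1 r1 e0 (ex_intro _ v1 hv1).
  have rx2 : ri (dom F2) x.
    have [a1 Fa1] := ri_sub r1; have [a2 Fa2] := ri_sub r2.
    have G0 : gph (sum_map F1 F2) (row_mx x0 (a1 + a2)).
      by apply/gph_row; exists a1, a2.
    have [e [e0 he]] := ri_pro rz G0.
    rewrite rmE1 in he; move/gph_row: he => [v1 [v2 [hv1 [hv2 _]]]].
    exact: nc_pr nD2 r2 e0 (ex_intro _ v2 hv2).
  have [w1 rw1] := ex_ri nc1 rx1; have [w2 rw2] := ex_ri nc2 rx2.
  have Gw : gph (sum_map F1 F2) (row_mx x (w1 + w2)).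
    apply/gph_row; exists w1, w2; split; last split => //.
      exact: (proj1 (gph_row _ _ _) (ri_sub rw1)).
    exact: (proj1 (gph_row _ _ _) (ri_sub rw2)).
  have [e [e0 he]] := ri_pro rz Gw.
  rewrite rmE1 subrr scaler0 addr0 in he.
  move/gph_row: he => [v1 [v2 [hv1 [hv2 hv]]]].
  have t0 : 0 <= (1 + e)^-1 by rewrite invr_ge0; clear -e0; lra.
  have t1 : (1 + e)^-1 < 1 by rewrite invf_lt1; clear -e0; lra.
  have q1 := nc_seg nc1 rw1 (proj2 (gph_row _ _ _) hv1) t0 t1.
  have q2 := nc_seg nc2 rw2 (proj2 (gph_row _ _ _) hv2) t0 t1.
  rewrite rmE1 subrr scaler0 addr0 in q1; rewrite rmE1 subrr scaler0 addr0 in q2.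
  exists (w1 + (1 + e)^-1 *: (v1 - w1)), (w2 + (1 + e)^-1 *: (v2 - w2)).
  split; first exact: fib_sub q1.
  split; first exact: fib_sub q2.
  have -> : w1 + (1 + e)^-1 *: (v1 - w1) + (w2 + (1 + e)^-1 *: (v2 - w2)) =
    (w1 + w2) + (1 + e)^-1 *: ((v1 + v2) - (w1 + w2)).
    by apply/rowP => j; rewrite !mxE; ring.
  rewrite -hv; apply/rowP => j; rewrite !mxE; field.
  exact: lt0r_neq0 (addr_gt0 ltr01 e0).
- move=> [x [y [-> [[rx1 rx2] [y1 [y2 [ry1 [ry2 ->]]]]]]]].
  have g1 := fib_sup nc1 rx1 ry1; have g2 := fib_sup nc2 rx2 ry2.
  apply: (nc_R2 nG).
    by apply/gph_row; exists y1, y2; split; [exact: ri_sub ry1 | split; [exact: ri_sub ry2|]].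
  move=> c [x' [y' [-> [u1 [u2 [hu1 [hu2 ->]]]]]]].
  have [e1 [e10 he1]] := ri_pro g1 (proj2 (gph_row _ _ _) hu1).
  have [e2 [e20 he2]] := ri_pro g2 (proj2 (gph_row _ _ _) hu2).
  have e0 : 0 < Order.min e1 e2 by rewrite lt_min e10 e20.
  have m1 : Order.min e1 e2 <= e1 by rewrite ge_min lexx.
  have m2 : Order.min e1 e2 <= e2 by rewrite ge_min lexx orbT.
  have k1 := nc_small nc1 g1 e0 m1 he1.
  have k2 := nc_small nc2 g2 e0 m2 he2.
  exists (Order.min e1 e2); split => //.
  rewrite rmE1 in k1; rewrite rmE1 in k2; rewrite rmE1; apply/gph_row.
  move/gph_row: k1 => k1; move/gph_row: k2 => k2.
  eexists; eexists; split; first exact: k1; split; first exact: k2.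
  by apply/rowP => j; rewrite !mxE; ring.
Qed.
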